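(* Let $\lambda$ be an infinite cardinal, let $\mathbb T$ be the unit circle group with its usual topology, and let $\tau_B$ be the topology on the Brandt semigroup $B_\lambda(\mathbb T)$ defined as follows: for a non-zero point $(\alpha,x,\beta)$ a base of neighbourhoods is $\{(\alpha,U,\beta):U$ a neighbourhood of $x$ in $\mathbb T\}$, where $(\alpha,U,\beta)=\{(\alpha,u,\beta):u\in U\}$; a base of neighbourhoods of $0$ consists of the sets $B_\lambda(\mathbb T)\setminus\big(\mathbb T_{\alpha_1,\beta_1}\cup\dots\cup\mathbb T_{\alpha_n,\beta_n}\cup\{(\alpha,x_j,\beta):\alpha,\beta\in\lambda,\ j=1,\dots,k\}\big)$ with $n,k\in\mathbb N$, $\alpha_1,\beta_1,\dots,\alpha_n,\beta_n\in\lambda$, $x_1,\dots,x_k\in\mathbb T$, where $\mathbb T_{\alpha,\beta}=\{(\alpha,x,\beta):x\in\mathbb T\}$. Then the space $(B_\lambda(\mathbb T),\tau_B)$ is countably pracompact if and only if $\lambda\le\mathfrak c$.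
   Context: For a group $G$ and cardinal $\lambda$, $B_\lambda(G)=(\lambda\times G\times\lambda)\cup\{0\}$ with $(\alpha,a,\beta)(\gamma,b,\delta)=(\alpha,ab,\delta)$ if $\beta=\gamma$ and $0$ otherwise. A space $X$ is countably pracompact if there is a dense set $A\subseteq X$ such that every infinite subset of $A$ has an accumulation point in $X$. $\mathfrak c$ is the cardinality of the continuum. *)

(* Defs.v *)
From Stdlib Require Import Reals List.
Open Scope R_scope.

Definition finite_set {X : Type} (S : X -> Prop) : Prop :=
  exists l : list X, forall x, S x -> In x l.

Definition dense {X : Type} (is_open : (X -> Prop) -> Prop) (A : X -> Prop) : Prop :=
  forall O, is_open O -> (exists p, O p) -> exists a, A a /\ O a.

Definition accumulation_point {X : Type} (is_open : (X -> Prop) -> Prop)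
  (S : X -> Prop) (p : X) : Prop :=
  forall O, is_open O -> O p -> exists q, S q /\ q <> p /\ O q.

Definition countably_pracompact {X : Type} (is_open : (X -> Prop) -> Prop) : Prop :=
  exists A : X -> Prop, dense is_open A /\
    forall S : X -> Prop, (forall x, S x -> A x) -> ~ finite_set S ->
      exists p, accumulation_point is_open S p.

Definition circle : Type := {p : R * R | fst p * fst p + snd p * snd p = 1}.

Definition cdist (x y : circle) : R :=
  let (p, _) := x in let (q, _) := y in
  sqrt ((fst p - fst q) * (fst p - fst q) + (snd p - snd q) * (snd p - snd q)).

Definition nbhd_T (x : circle) (U : circle -> Prop) : Prop :=
  exists eps, 0 < eps /\ forall u, cdist x u < eps -> U u.

(* Carrier of the Brandt semigroup B_lambda(T) = (L x T x L) u {0},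
   where the index set lambda is represented by a type L. *)
Inductive Brandt (L : Type) : Type :=
| Bzero : Brandt L
| Btrip : L -> circle -> L -> Brandt L.
Arguments Bzero {L}.
Arguments Btrip {L} _ _ _.

(* Semigroup operation (not used in the topology, recorded for context). *)
Definition circle_mul (x y : circle) : R * R :=
  let (p, _) := x in let (q, _) := y in
  (fst p * fst q - snd p * snd q, fst p * snd q + snd p * fst q).

Definition tauB_open {L : Type} (O : Brandt L -> Prop) : Prop :=
  forall p, O p ->
    match p with
    | Btrip a x b =>
        exists U, nbhd_T x U /\ forall u, U u -> O (Btrip a u b)
    | Bzero =>
        exists (ab : list (L * L)) (xs : list circle),
          forall a x b, ~ In (a, b) ab -> ~ In x xs -> O (Btrip a x b)
    end.

Definition infinite_type (L : Type) : Prop := ~ finite_set (fun _ : L => True).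
Definition card_le_continuum (L : Type) : Prop :=
  exists f : L -> R, forall a b, f a = f b -> a = b.

(* Main.v *)
Require Import Defs.
From Coquelicot Require Import Coquelicot.
From Stdlib Require Import Reals List Psatz Lra Lia ZArith Classical ClassicalEpsilon ProofIrrelevance FinFun Cantor FunctionalExtensionality.
Open Scope R_scope.

Lemma circ_eq (x y : circle) : proj1_sig x = proj1_sig y -> x = y.
Proof. destruct x as [p hp], y as [q hq]; simpl; intros ->. f_equal; apply proof_irrelevance. Qed.

Definition Pt (t : R) : R * R := ((1 - t*t)/(1+t*t), 2*t/(1+t*t)).
Lemma pos1 t : 0 < 1 + t*t. Proof. nra. Qed.
Lemma Pt_ok t : fst (Pt t) * fst (Pt t) + snd (Pt t) * snd (Pt t) = 1.
Proof. unfold Pt; simpl. pose proof (pos1 t). field. lra. Qed.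
Definition P (t : R) : circle := exist _ (Pt t) (Pt_ok t).
Lemma sp_ok : fst (-1,0) * fst (-1,0) + snd (-1,0) * snd (-1,0) = 1.
Proof. simpl; lra. Qed.
Definition sp : circle := exist _ (-1,0) sp_ok.

Lemma tP t : snd (Pt t) / (1 + fst (Pt t)) = t.
Proof. unfold Pt; simpl. pose proof (pos1 t). field. split; nra. Qed.
Lemma P_inj s t : P s = P t -> s = t.
Proof. intro H. rewrite <- (tP s), <- (tP t). assert (Pt s = Pt t) by (apply (f_equal (@proj1_sig _ _)) in H; exact H). rewrite H0; reflexivity. Qed.
Lemma P_nsp t : fst (Pt t) <> -1.
Proof. unfold Pt; simpl. pose proof (pos1 t). intro E. apply (f_equal (fun z => z * (1+t*t))) in E. field_simplify in E; lra. Qed.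
Lemma P_ne_sp t : P t <> sp.
Proof. intro H. apply (f_equal (fun c => fst (proj1_sig c))) in H. simpl in H. apply (P_nsp t). exact H. Qed.
Definition tc (c : circle) : R := snd (proj1_sig c) / (1 + fst (proj1_sig c)).
Lemma P_repr c : fst (proj1_sig c) <> -1 -> c = P (tc c).
Proof. intro Hn. apply circ_eq. destruct c as [[x y] h]; simpl in *. unfold tc, Pt; simpl.
  assert (1 + x <> 0) by lra. assert (E : 1 + y / (1 + x) * (y / (1 + x)) = 2 / (1 + x)).
  { replace (1 + y / (1 + x) * (y / (1 + x))) with (((1+x)*(1+x) + y*y)/((1+x)*(1+x))) by (field; auto).
    replace (y*y) with (1 - x*x) by lra. field. auto. }
  rewrite E. replace (1 - y / (1 + x) * (y / (1 + x))) with (2 - 2/(1+x)) by lra.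
  f_equal; field; auto.
Qed.
Lemma cdist_P s t : cdist (P s) (P t) <= 2 * Rabs (s - t).
Proof.
  unfold cdist, P, Pt; simpl. pose proof (pos1 s); pose proof (pos1 t).
  set (I := _ + _).
  assert (EI : I = 4 * ((s - t) * (s - t)) / ((1 + s*s) * (1 + t*t))) by (unfold I; field; lra). clearbody I.
  assert (I <= (2 * (s - t)) * (2 * (s - t))).
  { rewrite EI. apply Rle_trans with (4 * ((s - t) * (s - t)) / 1).
    - unfold Rdiv. apply Rmult_le_compat_l. pose proof (Rle_0_sqr (s-t)); unfold Rsqr in *; lra. apply Rinv_le_contravar; nra.
    - lra. }
  replace (2 * Rabs (s - t)) with (Rabs (2 * (s - t))) by (rewrite Rabs_mult, Rabs_right; lra).
  rewrite <- sqrt_Rsqr_abs. apply sqrt_le_1_alt. unfold Rsqr. lra.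
Qed.

Lemma cdist_sp t eps : 0 < eps -> 2 / eps < Rabs t -> cdist sp (P t) < eps.
Proof.
  intros He Ht. unfold cdist, P, Pt, sp; simpl. pose proof (pos1 t).
  set (I := _ + _).
  assert (EI : I = 4 / (1 + t*t)) by (unfold I; field; lra).
  assert (0 <= I) by (rewrite EI; apply Rlt_le, Rdiv_lt_0_compat; lra). clearbody I.
  assert (Ht2 : 2 < eps * Rabs t).
  { apply (Rmult_lt_compat_l eps) in Ht; auto. replace (eps * (2/eps)) with 2 in Ht by (field; lra). lra. }
  assert (Rabs t * Rabs t = t * t) by (rewrite <- Rabs_mult; apply Rabs_right; nra).
  assert (I < eps * eps).
  { rewrite EI. apply (Rmult_lt_reg_r (1 + t*t)); auto. unfold Rdiv. rewrite Rmult_assoc, Rinv_l by lra. nra. }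
  rewrite <- (sqrt_square eps) by lra. apply sqrt_lt_1_alt. split; auto.
Qed.

Lemma sq2_0 a b : a*a + b*b = 0 -> a = 0 /\ b = 0.
Proof. intro h. pose proof (Rle_0_sqr a); pose proof (Rle_0_sqr b); unfold Rsqr in *.
  split; apply Rsqr_0_uniq; unfold Rsqr; lra. Qed.
Lemma sq2_ge0 a b : 0 <= a*a + b*b.
Proof. pose proof (Rle_0_sqr a); pose proof (Rle_0_sqr b); unfold Rsqr in *; lra. Qed.

Lemma cdist_ge0 x y : 0 <= cdist x y.
Proof. destruct x as [p hp], y as [q hq]; unfold cdist. apply sqrt_pos. Qed.

Lemma cdist_pos x y : x <> y -> 0 < cdist x y.
Proof.
  intro H. destruct (Rle_lt_or_eq_dec _ _ (cdist_ge0 x y)) as [h|h]; auto.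
  exfalso; apply H. destruct x as [[a b] hp], y as [[c d] hq]; unfold cdist in h; simpl in h.
  symmetry in h. apply sqrt_eq_0 in h; [|apply sq2_ge0].
  apply sq2_0 in h. apply circ_eq; simpl. f_equal; lra.
Qed.

Lemma inf_avoid {T} (X : T -> Prop) : ~ finite_set X -> forall l, exists y, X y /\ ~ In y l.
Proof.
  intros H l. apply NNPP; intro N. apply H. exists l. intros x Hx.
  apply NNPP; intro N2. apply N. eauto.
Qed.

Lemma finite_mono {T} (X Y : T -> Prop) : (forall x, X x -> Y x) -> finite_set Y -> finite_set X.
Proof. intros H [l Hl]. exists l; auto. Qed.

Lemma Rabs_lt_between' a b e : a - e < b -> b < a + e -> Rabs (b - a) < e.
Proof. intros; unfold Rabs; destruct (Rcase_abs (b - a)); lra. Qed.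

Lemma Rabs_le_between y M : Rabs y <= M -> -M <= y <= M.
Proof. unfold Rabs; destruct (Rcase_abs y); intros; lra. Qed.

Lemma acc_R (Y : R -> Prop) : ~ finite_set Y -> (exists M, forall y, Y y -> Rabs y <= M) ->
  exists l, forall eps, 0 < eps -> exists y, Y y /\ y <> l /\ Rabs (y - l) < eps.
Proof.
  intros Hinf [M HM].
  set (E := fun z => ~ finite_set (fun y => Y y /\ z <= y)).
  assert (HE0 : E (- M)).
  { intro F. apply Hinf. apply (finite_mono _ _ (fun y hy => conj hy (proj1 (Rabs_le_between _ _ (HM y hy) ) ))) in F; exact F. }
  assert (HB : bound E).
  { exists M. intros z Hz. destruct (Rle_or_lt z M) as [h|h]; auto. exfalso. apply Hz.
    exists nil. intros y [Hy Hzy]. specialize (HM y Hy). apply Rabs_le_between in HM. lra. }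
  destruct (completeness E HB (ex_intro _ _ HE0)) as [l [Hub Hlub]].
  exists l. intros eps Heps.
  assert (Hz : exists z, E z /\ l - eps/2 < z).
  { apply NNPP; intro N. assert (l <= l - eps/2); [|lra]. apply Hlub. intros z Ez.
    destruct (Rle_or_lt z (l - eps/2)) as [h|h]; auto. exfalso; apply N; eauto. }
  destruct Hz as [z [Ez Hz]].
  assert (Hinf1 : ~ finite_set (fun y => Y y /\ l - eps/2 <= y)).
  { intro F. apply Ez. revert F. apply finite_mono. intros y [Hy h]; split; auto; lra. }
  assert (Hfin2 : finite_set (fun y => Y y /\ l + eps/2 <= y)).
  { apply NNPP; intro N. assert (l + eps/2 <= l) by (apply Hub; exact N). lra. }
  destruct Hfin2 as [l2 Hl2].
  destruct (inf_avoid _ Hinf1 (l :: l2)) as [y [[Hy h1] Hn]].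
  exists y. split; auto. split.
  - intro e; apply Hn; left; auto.
  - destruct (Rle_or_lt (l + eps/2) y) as [h|h].
    + exfalso; apply Hn; right; apply Hl2; auto.
    + apply Rabs_lt_between'; lra.
Qed.

Lemma sp_unique c : fst (proj1_sig c) = -1 -> c = sp.
Proof.
  destruct c as [[x y] h]; simpl; intro e. subst x. apply circ_eq; simpl.
  simpl in h. assert (y * y + 0 * 0 = 0) by (replace (y*y) with (-1 * -1 + y*y - 1) by ring; rewrite h; ring). apply sq2_0 in H. destruct H; subst; auto.
Qed.

Lemma acc_circle (X : circle -> Prop) : ~ finite_set X ->
  exists c, forall eps, 0 < eps -> exists x, X x /\ x <> c /\ cdist c x < eps.
Proof.
  intros Hinf. set (Y := fun t => X (P t)).
  assert (HY : ~ finite_set Y).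
  { intros [lt Hlt]. apply Hinf. exists (sp :: map P lt). intros x Hx.
    destruct (Req_dec (fst (proj1_sig x)) (-1)) as [e|e].
    - left; symmetry; apply sp_unique; auto.
    - right. rewrite (P_repr x e). apply in_map. apply Hlt. unfold Y. rewrite <- (P_repr x e). auto. }
  destruct (classic (exists M, forall y, Y y -> Rabs y <= M)) as [Hb|Hnb].
  - destruct (acc_R Y HY Hb) as [l Hl]. exists (P l). intros eps Heps.
    destruct (Hl (eps/2)) as [y [Hy [Hne Hd]]]; [lra|].
    exists (P y). split; [exact Hy|]. split.
    + intro E; apply Hne; apply P_inj; auto.
    + eapply Rle_lt_trans; [apply cdist_P|]. rewrite Rabs_minus_sym. lra.
  - exists sp. intros eps Heps.
    assert (exists y, Y y /\ 2/eps < Rabs y).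
    { apply NNPP; intro N. apply Hnb. exists (2/eps). intros y Hy.
      destruct (Rle_or_lt (Rabs y) (2/eps)); auto. exfalso; apply N; eauto. }
    destruct H as [y [Hy Hr]]. exists (P y). split; [exact Hy|]. split.
    + apply P_ne_sp.
    + apply cdist_sp; auto.
Qed.

Definition bR (b : bool) : R := if b then 1 else 0.
Definition term (s : nat -> bool) (n : nat) : R := bR (s n) * (/3)^n.
Definition phi (s : nat -> bool) : R := /3 * Series (term s).

Lemma bR_bd b : 0 <= bR b <= 1. Proof. destruct b; simpl; lra. Qed.

Lemma geom3 : is_series (fun n => (/3)^n) (3/2).
Proof. replace (3/2) with (/(1 - /3)) by field. apply is_series_geom. rewrite Rabs_right; lra. Qed.

Lemma term_bd s n : 0 <= term s n <= (/3)^n.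
Proof. unfold term. pose proof (bR_bd (s n)). pose proof (pow_le (/3) n ltac:(lra)). nra. Qed.

Lemma ex_term s : ex_series (term s).
Proof.
  apply (@ex_series_le R_AbsRing R_CompleteNormedModule _ (fun n => (/3)^n)).
  - intro n. unfold norm; simpl. unfold abs; simpl. rewrite Rabs_right; [apply term_bd|apply Rle_ge, term_bd].
  - eexists; apply geom3.
Qed.

Lemma phi_bd s : 0 <= phi s <= /2.
Proof.
  unfold phi. split.
  - apply Rmult_le_pos; [lra|]. replace 0 with (Series (fun n => 0 * term s n)).
    + apply Series_le; [intro n; pose proof (term_bd s n); lra| apply ex_term].
    + rewrite Series_scal_l; ring.
  - assert (Series (term s) <= 3/2).
    { rewrite <- (is_series_unique _ _ geom3). apply Series_le; [apply term_bd| eexists; apply geom3]. }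
    lra.
Qed.

Lemma phi_step s : phi s = bR (s 0%nat) / 3 + phi (fun n => s (S n)) / 3.
Proof.
  unfold phi. rewrite Series_incr_1 by apply ex_term.
  replace (fun k => term s (S k)) with (fun k => /3 * term (fun n => s (S n)) k).
  - rewrite Series_scal_l. unfold term at 1; simpl. field.
  - apply FunctionalExtensionality.functional_extensionality. intro k. unfold term; simpl. ring.
Qed.

Lemma phi_head s s' : phi s = phi s' -> s 0%nat = s' 0%nat.
Proof.
  intro H. rewrite (phi_step s), (phi_step s') in H.
  pose proof (phi_bd (fun n => s (S n))). pose proof (phi_bd (fun n => s' (S n))).
  destruct (s 0%nat), (s' 0%nat); auto; simpl in H; exfalso; lra.
Qed.

Lemma phi_tail s s' : phi s = phi s' -> phi (fun n => s (S n)) = phi (fun n => s' (S n)).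
Proof.
  intro H. pose proof (phi_head s s' H) as E. rewrite (phi_step s), (phi_step s'), E in H. lra.
Qed.

Lemma phi_inj_n n : forall s s', phi s = phi s' -> s n = s' n.
Proof.
  induction n as [|n IH]; intros s s' H.
  - apply phi_head; auto.
  - apply (IH (fun n => s (S n)) (fun n => s' (S n))). apply phi_tail; auto.
Qed.

Lemma phi_ext s s' : (forall n, s n = s' n) -> phi s = phi s'.
Proof. intro H. unfold phi. f_equal. apply Series_ext. intro n; unfold term; rewrite H; auto. Qed.

Lemma phi_shift M : forall s, exists z : Z, 3^M * phi s = IZR z + phi (fun n => s (n + M)%nat).
Proof.
  induction M as [|M IH]; intro s.
  - exists 0%Z. simpl. rewrite (phi_ext s (fun n => s (n+0)%nat)) by (intro; f_equal; lia). ring.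
  - destruct (IH s) as [z Hz]. exists (3 * z + (if s M then 1 else 0))%Z.
    replace (3 ^ S M * phi s) with (3 * (3^M * phi s)) by (simpl; ring). rewrite Hz.
    rewrite plus_IZR, mult_IZR.
    rewrite (phi_step (fun n => s (n + M)%nat)). simpl.
    rewrite (phi_ext (fun n => s (S (n + M))%nat) (fun n => s (n + S M)%nat)) by (intro; f_equal; lia).
    destruct (s M); simpl; unfold bR; field.
Qed.

Definition decode (i : nat) : bool * Z * nat :=
  let (p, k) := Cantor.of_nat i in let (q, r) := Cantor.of_nat p in
  let (s, t) := Cantor.of_nat q in (Nat.eqb s 0, (Z.of_nat r - Z.of_nat t)%Z, k).
Definition sigma (n : nat) := decode (fst (Cantor.of_nat n)).

Lemma decode_surj v : exists i, decode i = v.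
Proof.
  destruct v as [[side m] k].
  exists (Cantor.to_nat (Cantor.to_nat (Cantor.to_nat ((if side then 0 else 1)%nat, Z.to_nat (- m)), Z.to_nat m), k)).
  unfold decode. rewrite !Cantor.cancel_of_to. f_equal. f_equal.
  - destruct side; reflexivity.
  - lia.
Qed.

Lemma sigma_rec v M : exists n, (M <= n)%nat /\ sigma n = v.
Proof.
  destruct (decode_surj v) as [i Hi]. exists (Cantor.to_nat (i, M)). split.
  - pose proof (Cantor.to_nat_non_decreasing i M). lia.
  - unfold sigma. rewrite Cantor.cancel_of_to. exact Hi.
Qed.

Definition wbits (u v : R) (n : nat) : bool :=
  let '(side, m, k) := sigma n in
  if Rlt_dec (IZR m / INR (S k)) (if side then u else v) then true else false.

Lemma dense_Q u v : u < v -> exists m k, u < IZR m / INR (S k) < v.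
Proof.
  intro H. destruct (archimed_cor1 (v - u)) as [N [HN HN0]]; [lra|].
  destruct N as [|k]; [lia|]. exists (up (u * INR (S k))), k.
  destruct (archimed (u * INR (S k))) as [h1 h2].
  assert (0 < INR (S k)) by (apply lt_0_INR; lia).
  split.
  - apply (Rmult_lt_reg_r (INR (S k))); auto. unfold Rdiv; rewrite Rmult_assoc, Rinv_l by lra. lra.
  - apply (Rmult_lt_reg_r (INR (S k))); auto. unfold Rdiv; rewrite Rmult_assoc, Rinv_l by lra.
    apply (Rmult_lt_compat_r (INR (S k))) in HN; auto. rewrite Rinv_l in HN by lra. lra.
Qed.

Lemma sel_eq (side : bool) u v u' v' M :
  (forall n, (M <= n)%nat -> wbits u v n = wbits u' v' n) ->
  (if side then u else v) = (if side then u' else v').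
Proof.
  intro H. set (x := if side then u else v). set (x' := if side then u' else v').
  assert (K : forall m k, IZR m / INR (S k) < x <-> IZR m / INR (S k) < x').
  { intros m k. destruct (sigma_rec (side, m, k) M) as [n [Hn Hs]].
    specialize (H n Hn). unfold wbits in H. rewrite Hs in H. fold x x' in H.
    destruct (Rlt_dec (IZR m / INR (S k)) x), (Rlt_dec (IZR m / INR (S k)) x'); try discriminate; tauto. }
  destruct (Rtotal_order x x') as [h|[h|h]]; auto.
  - destruct (dense_Q _ _ h) as [m [k [h1 h2]]]. apply K in h2. lra.
  - destruct (dense_Q _ _ h) as [m [k [h1 h2]]]. apply K in h2. lra.
Qed.

Lemma wbits_tail u v u' v' M :
  (forall n, (M <= n)%nat -> wbits u v n = wbits u' v' n) -> u = u' /\ v = v'.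
Proof. intro H. split; [apply (sel_eq true _ _ _ _ _ H) | apply (sel_eq false _ _ _ _ _ H)]. Qed.

Lemma pigeon {T} (h : nat -> T) : (forall n m, h n = h m -> n = m) -> forall l, exists n, ~ In (h n) l.
Proof.
  intros Hi l. apply NNPP; intro N.
  assert (incl (map h (seq 0 (S (length l)))) l).
  { intros y Hy. apply in_map_iff in Hy. destruct Hy as [n [<- _]]. apply NNPP; intro N2; apply N; eauto. }
  apply NoDup_incl_length in H; [|apply Injective_map_NoDup; [intros a b; apply Hi| apply seq_NoDup]].
  rewrite length_map, length_seq in H. lia.
Qed.

Definition psi {L} (f : L -> R) (a b : L) : R := phi (wbits (f a) (f b)).
Definition Dset {L} (f : L -> R) (a b : L) (x : circle) : Prop :=
  exists (k : Z) (N : nat), x = P (IZR k / 3^N + psi f a b).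

Lemma pow3_pos N : 0 < 3^N. Proof. apply pow_lt; lra. Qed.

Lemma D_disj {L} (f : L -> R) (Hf : forall a b, f a = f b -> a = b) a b a' b' x :
  Dset f a b x -> Dset f a' b' x -> a = a' /\ b = b'.
Proof.
  intros [k [N Hx]] [k' [N' Hx']]. rewrite Hx in Hx'. apply P_inj in Hx'.
  unfold psi in Hx'. set (w := wbits (f a) (f b)) in *. set (w' := wbits (f a') (f b')) in *.
  set (M := (N + N')%nat).
  pose proof (pow3_pos N) as HA; pose proof (pow3_pos N') as HB.
  assert (E2 : IZR k * 3^N' + 3^M * phi w = IZR k' * 3^N + 3^M * phi w').
  { apply (f_equal (fun z => z * (3^N * 3^N'))) in Hx'. unfold M; rewrite pow_add.
    replace ((IZR k / 3 ^ N + phi w) * (3 ^ N * 3 ^ N')) with (IZR k * 3^N' + 3^N * 3^N' * phi w) in Hx' by (field; lra).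
    replace ((IZR k' / 3 ^ N' + phi w') * (3 ^ N * 3 ^ N')) with (IZR k' * 3^N + 3^N * 3^N' * phi w') in Hx' by (field; lra).
    exact Hx'. }
  destruct (phi_shift M w) as [z Hz]. destruct (phi_shift M w') as [z' Hz'].
  rewrite Hz, Hz' in E2.
  replace (3^N') with (IZR (3 ^ Z.of_nat N')) in E2 by (rewrite <- pow_IZR; reflexivity).
  replace (3^N) with (IZR (3 ^ Z.of_nat N)) in E2 by (rewrite <- pow_IZR; reflexivity).
  set (sw := fun n => w (n + M)%nat) in *. set (sw' := fun n => w' (n + M)%nat) in *.
  assert (EW : phi sw - phi sw' = IZR (k' * 3 ^ Z.of_nat N + z' - k * 3 ^ Z.of_nat N' - z)).
  { rewrite !minus_IZR, !plus_IZR, !mult_IZR. lra. }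
  pose proof (phi_bd sw); pose proof (phi_bd sw').
  set (W := (k' * 3 ^ Z.of_nat N + z' - k * 3 ^ Z.of_nat N' - z)%Z) in *.
  assert (W = 0%Z).
  { assert (-1 < IZR W < 1) by lra. destruct H1 as [h1 h2]. apply lt_IZR in h1. apply lt_IZR in h2. lia. }
  rewrite H1 in EW. simpl in EW.
  assert (Hsame : forall n, (M <= n)%nat -> w n = w' n).
  { intros n Hn. replace n with ((n - M) + M)%nat by lia. apply (phi_inj_n (n - M) sw sw'). lra. }
  destruct (wbits_tail _ _ _ _ M Hsame) as [e1 e2]. split; apply Hf; auto.
Qed.

Lemma D_dense {L} (f : L -> R) a b x eps : 0 < eps -> exists u, Dset f a b u /\ cdist x u < eps.
Proof.
  intro He. set (ps := psi f a b).
  destruct (Req_dec (fst (proj1_sig x)) (-1)) as [e|e].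
  - apply sp_unique in e. subst x.
    destruct (archimed (2/eps - ps)) as [h1 h2].
    exists (P (IZR (up (2/eps - ps)) / 3^0 + ps)). split.
    + exists (up (2/eps - ps)), 0%nat; auto.
    + apply cdist_sp; auto. simpl. assert (0 < 2/eps) by (apply Rdiv_lt_0_compat; lra).
      rewrite Rabs_right; lra.
  - rewrite (P_repr x e). set (t0 := tc x).
    destruct (pow_lt_1_zero (/3) ltac:(rewrite Rabs_right; lra) (eps/2) ltac:(lra)) as [N HN].
    specialize (HN N (le_n N)). rewrite pow_inv in HN. pose proof (pow3_pos N).
    rewrite Rabs_right in HN by (apply Rle_ge, Rlt_le, Rinv_0_lt_compat; auto).
    set (r := (t0 - ps) * 3^N). destruct (archimed r) as [h1 h2].
    set (k := (up r - 1)%Z).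
    exists (P (IZR k / 3^N + ps)). split.
    + exists k, N; auto.
    + eapply Rle_lt_trans; [apply cdist_P|].
      assert (IZR k <= r < IZR k + 1) by (unfold k; rewrite minus_IZR; simpl; lra).
      assert (Rabs (t0 - (IZR k / 3 ^ N + ps)) < / 3^N).
      { apply Rabs_def1.
        - apply (Rmult_lt_reg_r (3^N)); auto. unfold r in H0.
          replace ((t0 - (IZR k / 3 ^ N + ps)) * 3 ^ N) with ((t0 - ps) * 3^N - IZR k) by (field; lra).
          rewrite Rinv_l by lra. lra.
        - apply (Rmult_lt_reg_r (3^N)); auto. unfold r in H0.
          replace ((t0 - (IZR k / 3 ^ N + ps)) * 3 ^ N) with ((t0 - ps) * 3^N - IZR k) by (field; lra).
          replace (- / 3 ^ N * 3 ^ N) with (-1) by (field; lra). lra. }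
      lra.
Qed.

Lemma D_avoid {L} (f : L -> R) a b l : exists u, Dset f a b u /\ ~ In u l.
Proof.
  destruct (pigeon (fun n => P (IZR (Z.of_nat n) / 3^0 + psi f a b))) with (l := l) as [n Hn].
  - intros n m H. apply P_inj in H. simpl in H. rewrite <- !INR_IZR_INZ in H. apply INR_eq. lra.
  - eexists; split; [|exact Hn]. eexists; eexists; reflexivity.
Qed.

Lemma backward (L : Type) (HL : infinite_type L) (f : L -> R) (Hf : forall a b, f a = f b -> a = b) :
  countably_pracompact (@tauB_open L).
Proof.
  set (A := fun q : Brandt L => match q with Bzero => False | Btrip a x b => Dset f a b x end).
  exists A. split.
  - intros O HO [p Hp]. destruct p as [|a x b].
    + destruct (HO _ Hp) as [ab [xs H]].
      destruct (inf_avoid (fun _ : L => True) HL (map fst ab)) as [a0 [_ Ha0]].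
      destruct (D_avoid f a0 a0 xs) as [u [Du Hu]].
      exists (Btrip a0 u a0). split; [exact Du|]. apply H; auto.
      intro I. apply Ha0. apply (in_map fst) in I. exact I.
    + destruct (HO _ Hp) as [U [[eps [He HU]] HUO]].
      destruct (D_dense f a b x eps He) as [u [Du Hu]].
      exists (Btrip a u b). split; [exact Du|]. apply HUO, HU; auto.
  - intros S HSA HSinf.
    destruct (classic (exists a b, ~ finite_set (fun x => S (Btrip a x b)))) as [[a [b Hab]] | Hall].
    + destruct (acc_circle _ Hab) as [c Hc]. exists (Btrip a c b).
      intros O HO Hp. destruct (HO _ Hp) as [U [[eps [He HU]] HUO]].
      destruct (Hc eps He) as [x [Sx [Hxc Hd]]]. exists (Btrip a x b). split; [exact Sx|]. split.
      * intro E; injection E; auto.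
      * apply HUO, HU; auto.
    + assert (fin : forall a b, finite_set (fun x => S (Btrip a x b))).
      { intros a b. apply NNPP; intro N; apply Hall; eauto. }
      exists Bzero. intros O HO H0. destruct (HO _ H0) as [ab [xs H]].
      assert (covP : forall abl, exists l, forall a x b, In (a,b) abl -> S (Btrip a x b) -> In (Btrip a x b) l).
      { intro abl; induction abl as [|[a b] r IH].
        - exists nil. intros ? ? ? [].
        - destruct (fin a b) as [lx Hlx]. destruct IH as [l Hl].
          exists (map (fun x => Btrip a x b) lx ++ l). intros a' x b' [E|I] Sx; apply in_or_app.
          + injection E as E1 E2; subst a' b'. left. apply (in_map (fun x => Btrip a x b)). auto.
          + right; auto. }
      assert (covX : forall xsl, exists l, forall a x b, In x xsl -> S (Btrip a x b) -> In (Btrip a x b) l).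
      { intro xsl; induction xsl as [|x r IH].
        - exists nil. intros ? ? ? [].
        - destruct IH as [l Hl]. destruct (classic (exists a b, Dset f a b x)) as [[a0 [b0 D0]]|ND].
          + destruct (fin a0 b0) as [lx Hlx].
            exists (map (fun x => Btrip a0 x b0) lx ++ l). intros a' x' b' [E|I] Sx; apply in_or_app.
            * subst x'. left. pose proof (HSA _ Sx) as Dx. simpl in Dx.
              destruct (D_disj f Hf _ _ _ _ _ D0 Dx) as [<- <-].
              apply (in_map (fun x => Btrip a0 x b0)). auto.
            * right; auto.
          + exists l. intros a' x' b' [E|I] Sx.
            * subst x'. exfalso. apply ND. exists a', b'. exact (HSA _ Sx).
            * auto. }
      destruct (covP ab) as [l1 Hl1]. destruct (covX xs) as [l2 Hl2].
      destruct (inf_avoid S HSinf (l1 ++ l2)) as [q [Sq Hq]].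
      exists q. split; [exact Sq|]. destruct q as [|a x b].
      * exfalso. exact (HSA _ Sq).
      * split; [discriminate|]. apply H.
        -- intro I. apply Hq, in_or_app; left; auto.
        -- intro I. apply Hq, in_or_app; right; auto.
Qed.

Fixpoint idx {L} (d : forall x y : L, {x = y} + {x <> y}) (l : list L) (a : L) : nat :=
  match l with nil => 0%nat | x :: r => if d x a then 0%nat else S (idx d r a) end.

Lemma idx_spec {L} d (l : list L) a : In a l -> nth_error l (idx d l a) = Some a.
Proof.
  induction l as [|x r IH]; simpl; [intros []|]. intros [E|I].
  - destruct (d x a); [subst; auto| congruence].
  - destruct (d x a); [subst; auto| simpl; auto].
Qed.

Definition hh (z : R) : R := /2 + z / (2 * (1 + Rabs z)).

Lemma hh_range z : 0 < hh z < 1.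
Proof.
  unfold hh. pose proof (Rabs_pos z). assert (0 < 2 * (1 + Rabs z)) by lra.
  assert (Rabs (z / (2 * (1 + Rabs z))) < /2).
  { unfold Rdiv. rewrite Rabs_mult, Rabs_inv, (Rabs_right (2 * _)) by lra.
    apply (Rmult_lt_reg_r (2 * (1 + Rabs z))); auto. rewrite Rmult_assoc, Rinv_l by lra. lra. }
  apply Rabs_def2 in H1. lra.
Qed.

Lemma hh_inj z z' : hh z = hh z' -> z = z'.
Proof.
  unfold hh. intro E. pose proof (Rabs_pos z); pose proof (Rabs_pos z').
  assert (z * (1 + Rabs z') = z' * (1 + Rabs z)).
  { apply (f_equal (fun t => (t - /2) * (2 * (1 + Rabs z)) * (2 * (1 + Rabs z')))) in E.
    field_simplify in E; try lra. }
  unfold Rabs in *; destruct (Rcase_abs z), (Rcase_abs z'); nra.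
Qed.

Definition G (c : circle) : R :=
  if Req_EM_T (fst (proj1_sig c)) (-1) then 0 else hh (tc c).

Lemma G_range c : 0 <= G c < 1.
Proof. unfold G. destruct Req_EM_T; [lra|]. pose proof (hh_range (tc c)); lra. Qed.

Lemma G_inj c c' : G c = G c' -> c = c'.
Proof.
  unfold G. destruct (Req_EM_T (fst (proj1_sig c)) (-1)) as [e|e], (Req_EM_T (fst (proj1_sig c')) (-1)) as [e'|e']; intro H.
  - rewrite (sp_unique _ e), (sp_unique _ e'); auto.
  - pose proof (hh_range (tc c')); lra.
  - pose proof (hh_range (tc c)); lra.
  - apply hh_inj in H. rewrite (P_repr c e), (P_repr c' e'), H; auto.
Qed.

Lemma nat_frac n m g g' : 0 <= g < 1 -> 0 <= g' < 1 -> INR n + g = INR m + g' -> n = m.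
Proof.
  intros h h' E.
  assert (INR n < INR (S m)) by (rewrite S_INR; lra).
  assert (INR m < INR (S n)) by (rewrite S_INR; lra).
  apply INR_lt in H; apply INR_lt in H0. lia.
Qed.

Lemma inj_of_fibers {L} (xf : L -> circle) : (forall c, finite_set (fun a => xf a = c)) ->
  exists F : L -> R, forall a b, F a = F b -> a = b.
Proof.
  intro Hfin.
  set (lf := fun c => proj1_sig (constructive_indefinite_description _ (Hfin c))).
  assert (Hlf : forall a, In a (lf (xf a))).
  { intro a. unfold lf. destruct (constructive_indefinite_description _ (Hfin (xf a))) as [l Hl]; simpl. auto. }
  set (d := fun x y : L => excluded_middle_informative (x = y)).
  exists (fun a => INR (idx d (lf (xf a)) a) + G (xf a)).
  intros a b E. pose proof (G_range (xf a)); pose proof (G_range (xf b)).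
  pose proof (nat_frac _ _ _ _ H H0 E) as En. rewrite En in E.
  assert (Ec : xf a = xf b) by (apply G_inj; lra).
  pose proof (idx_spec d _ _ (Hlf a)) as Sa. pose proof (idx_spec d _ _ (Hlf b)) as Sb.
  rewrite En, Ec, Sb in Sa. congruence.
Qed.

Lemma forward (L : Type) (HL : infinite_type L) :
  countably_pracompact (@tauB_open L) -> card_le_continuum L.
Proof.
  intros [A [Hd Hacc]].
  assert (H1 : forall a, exists x, A (Btrip a x a)).
  { intro a.
    set (O := fun q : Brandt L => match q with Bzero => False | Btrip a' _ b' => a' = a /\ b' = a end).
    destruct (Hd O) as [q [Aq Oq]].
    - intros p Hp. destruct p as [|a' x b']; [contradiction|].
      exists (fun _ => True). split; [exists 1; split; [lra|auto]|]. intros u _. exact Hp.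
    - exists (Btrip a (P 0) a). simpl; auto.
    - destruct q as [|a' x b']; [contradiction|]. destruct Oq; subst. eauto. }
  set (xf := fun a => proj1_sig (constructive_indefinite_description _ (H1 a))).
  assert (Hxf : forall a, A (Btrip a (xf a) a)).
  { intro a. unfold xf. destruct (constructive_indefinite_description _ (H1 a)); auto. }
  apply (inj_of_fibers xf). intro c.
  destruct (classic (exists a0 : L, True)) as [[a0 _]|NL].
  2: { exists nil. intros a _. exfalso; apply NL; eauto. }
  apply NNPP; intro N.
  set (S := fun q : Brandt L => exists a, xf a = c /\ q = Btrip a c a).
  assert (HSA : forall q, S q -> A q).
  { intros q [a [E ->]]. rewrite <- E. apply Hxf. }
  assert (HSinf : ~ finite_set S).
  { intros [l Hl]. apply N.
    exists (map (fun q => match q with Btrip a _ _ => a | Bzero => a0 end) l).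
    intros a Ha. apply (in_map (fun q => match q with Btrip a _ _ => a | Bzero => a0 end) l (Btrip a c a)).
    apply Hl. exists a; auto. }
  destruct (Hacc S HSA HSinf) as [p Hp].
  destruct p as [|a1 y b1].
  - set (O := fun q : Brandt L => match q with Bzero => True | Btrip _ x _ => x <> c end).
    destruct (Hp O) as [q [Sq [_ Oq]]].
    + intros p Op. destruct p as [|a x b].
      * exists nil, (c :: nil). intros a x b _ Hx E. apply Hx; left; auto.
      * exists (fun v => v <> c). split.
        -- exists (cdist x c). split; [apply cdist_pos; auto|]. intros u Hu E; subst; lra.
        -- auto.
    + simpl; auto.
    + destruct Sq as [a [_ ->]]. apply Oq; auto.
  - set (O := fun q : Brandt L => match q with Bzero => False | Btrip a u b => a = a1 /\ b = b1 /\ (u <> c \/ y = c) end).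
    destruct (Hp O) as [q [Sq [Hne Oq]]].
    + intros p Op. destruct p as [|a x b]; [contradiction|].
      destruct Op as [-> [-> Hor]].
      destruct (classic (y = c)) as [Hy|Hy].
      * exists (fun _ => True). split; [exists 1; split; [lra|auto]|]. intros v _. simpl; auto.
      * destruct Hor as [Hx|Hx]; [|contradiction].
        exists (fun v => v <> c). split.
        -- exists (cdist x c). split; [apply cdist_pos; auto|]. intros u Hu E; subst; lra.
        -- intros v Hv. simpl; auto.
    + simpl. split; auto. split; auto. destruct (classic (y = c)); auto.
    + destruct Sq as [a [_ ->]]. destruct Oq as [-> [-> [Hc|Hc]]]; [contradiction|].
      subst. contradiction.
Qed.

Theorem proposition2p14 (L : Type) (HL : infinite_type L) :
  countably_pracompact (@tauB_open L) <-> card_le_continuum L.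
Proof.
  split.
  - apply forward; auto.
  - intros [f Hf]. apply (backward L HL f Hf).
Qed.
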